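(* Let $\sigma^0=(+,-,-,-,-,-,+,+,+,+,+,-)$ be the sign pattern of length $12$. There exists no real monic polynomial $P(x)=x^{11}+a_{10}x^{10}+\cdots+a_1x+a_0$ whose coefficients have the signs prescribed by $\sigma^0$ (i.e. $a_{10},a_9,a_8,a_7,a_6<0$, $a_5,a_4,a_3,a_2,a_1>0$, $a_0<0$) and which has exactly one positive root and exactly eight negative roots, all of them simple (and hence a pair of complex conjugate non-real roots). In other words, the sign pattern $\sigma^0$ is not realizable with the admissible pair $(1,8)$.
   Context: A sign pattern is a finite sequence of $\pm$ signs with leading sign $+$; a polynomial $x^d+a_{d-1}x^{d-1}+\cdots+a_0$ with all coefficients nonzero defines the sign pattern consisting of the signs of its coefficients, listed from $x^d$ down to $x^0$. A sign pattern $\sigma$ is realizable with a pair $(pos,neg)$ if some monic real polynomial with sign pattern $\sigma$ has exactly $pos$ positive and exactly $neg$ negative roots, all simple. *)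

(* Defs.v *)
From mathcomp Require Import all_boot all_order all_algebra.
From mathcomp Require Import reals.
Set Implicit Arguments. Unset Strict Implicit. Unset Printing Implicit Defensive.
Import Order.TTheory GRing.Theory Num.Theory.
Local Open Scope ring_scope.

(* A sign pattern is a sequence of booleans: true = '+', false = '-',
   listed from the leading coefficient (x^d) down to the constant term (x^0). *)
Definition sign_pattern := seq bool.

Section Defs.
Variable R : realType.

Definition has_sign_pattern (p : {poly R}) (sigma : sign_pattern) : Prop :=
  size p = size sigma /\
  forall i : nat, (i < size p)%N ->
    (if nth true sigma (size p - 1 - i)%N then 0 < p`_i else p`_i < 0).

Definition num_roots_in (p : {poly R}) (P : R -> bool) (k : nat) : Prop :=
  exists rs : seq R, [/\ uniq rs, size rs = k &
     forall x : R, (x \in rs) = (P x && root p x)].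

Definition roots_simple_in (p : {poly R}) (P : R -> bool) : Prop :=
  forall x : R, P x -> root p x -> ~~ root p^`() x.

Definition realizable (sigma : sign_pattern) (pos neg : nat) : Prop :=
  exists p : {poly R},
    [/\ p \is monic, has_sign_pattern p sigma,
        num_roots_in p (fun x => 0 < x) pos,
        num_roots_in p (fun x => x < 0) neg &
        roots_simple_in p (fun x => (0 < x) || (x < 0))].
End Defs.

Definition sigma0 : sign_pattern :=
  [:: true; false; false; false; false; false; true; true; true; true; true; false].

(* Main.v *)
Require Import Defs.
From mathcomp Require Import all_boot all_order all_algebra.
From mathcomp Require Import reals.
From mathcomp Require Import polyrcf.
From mathcomp Require Import ring lra zify.
Set Implicit Arguments. Unset Strict Implicit. Unset Printing Implicit Defensive.
Import Order.TTheory GRing.Theory Num.Theory.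
Local Open Scope ring_scope.
Lemma finalA (R : realType) (t1 t3 t4 t5 B g : R) :
  0 < t1 -> 0 < t3 -> t3 <= t4 -> 32/5 * t1 <= t4 -> 25/16 * t4 <= t5 ->
  B * B < 4 * g -> g < (g + B) * t1 ->
  g < t5 * (t3 * t4 - (1 + B) * t4 + g + B) -> t5 <= 1 -> False.
Proof.
move=> h1 h3 h34 h14 h45 hD hC1 hC5 h5.
have ht4 : t4 < 1 by lra.
have hg : 0 < g by nra.
have hB : t4 < B.
  have : t4 * t5 * (1 - t3) + g * (1 - t5) < B * t5 * (1 - t4) by nra.
  have : t4 * t5 * (1 - t4) <= t4 * t5 * (1 - t3).
    apply: ler_wpM2l; [apply: mulr_ge0; lra | lra].
  have hg5 : 0 <= g * (1 - t5) by apply: mulr_ge0; lra.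
  move=> H1 H2.
  have H3 : 0 < (B - t4) * (t5 * (1 - t4)).
    have E : (B - t4) * (t5 * (1 - t4)) = B * t5 * (1 - t4) - t4 * t5 * (1 - t4) by ring.
    rewrite E; lra.
  have H4 : 0 < t5 * (1 - t4) by apply: mulr_gt0; lra.
  by move: H3; rewrite pmulr_lgt0 // subr_gt0.
have : B * (1 - t1) < 4 * t1 by nra.
nra.
Qed.

Lemma finalB (R : realType) (t4 t5 t6 t8 B g : R) :
  0 < t4 -> 1 < t5 -> 8/5 * t5 <= t6 -> 32/5 * t5 <= t8 -> t8 < 1 + B ->
  B * B < 4 * g -> t6 * (t4 * t5 - (1 + B) * t5 + g + B) < g -> False.
Proof.
move=> h4 h5 h56 h58 h10 hD hC6.
have E : t6 * (t4 * t5 - (1 + B) * t5 + g + B) - g = g * (t6 - 1) - t6 * (B * (t5 - 1) + t5 * (1 - t4)) by ring.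
have H1 : g * (t6 - 1) < t6 * (B * (t5 - 1) + t5 * (1 - t4)) by rewrite -subr_lt0 -E subr_lt0.
have H2 : t6 * (B * (t5 - 1) + t5 * (1 - t4)) <= t6 * (B * (t5 - 1) + t5).
  apply: ler_wpM2l; first lra.
  have : 0 <= t5 * t4 by apply: mulr_ge0; lra.
  lra.
have H3 : B * B * (t6 - 1) <= 4 * g * (t6 - 1).
  apply: ler_wpM2r; lra.
have H4 : B * B * (t6 - 1) - 4 * (t6 * (B * (t5 - 1) + t5)) < 0.
  rewrite subr_lt0; apply: (le_lt_trans H3); rewrite -mulrA ltr_pM2l //.
  exact: lt_le_trans H1 H2.
set D := 5 * B - 32 * t5 + 5.
set Ee := 5 * t6 - 8 * t5.
set f := t5 - 1.
have hd : 0 <= D by rewrite /D; lra.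
have he : 0 <= Ee by rewrite /Ee; lra.
have hf : 0 <= f by rewrite /f; lra.
have EF : 125 * (B * B * (t6 - 1) - 4 * (t6 * (B * (t5 - 1) + t5))) =
  1387 + (5096*f + (6656*f*f + (3072*f*f*f + (629*Ee + (1088*Ee*f + (384*Ee*f*f + (162*D + (464*D*f + (352*D*f*f + (54*D*Ee + (44*D*Ee*f + (3*D*D + (8*D*D*f + 1*D*D*Ee))))))))))))).
  by rewrite /D /Ee /f; ring.
have S : 0 <= 5096*f + (6656*f*f + (3072*f*f*f + (629*Ee + (1088*Ee*f + (384*Ee*f*f + (162*D + (464*D*f + (352*D*f*f + (54*D*Ee + (44*D*Ee*f + (3*D*D + (8*D*D*f + 1*D*D*Ee)))))))))))).
  by repeat (assumption || exact: ler0n || apply: addr_ge0 || apply: mulr_ge0).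
move: H4 EF S; set X := B * B * (t6 - 1) - 4 * (t6 * (B * (t5 - 1) + t5)).
set Y := 5096*f + _.
move=> H4 EF S.
lra.
Qed.

Lemma rolle_seq (R : realType) (p : {poly R}) (a : R) (s : seq R) :
  path <%R a s -> root p a -> all (root p) s -> all (fun x => x < 0) s ->
  exists s' : seq R, [/\ size s' = size s, sorted <%R s', all (root p^`()) s',
    all (fun x => a < x) s' & all (fun x => x < 0) s'].
Proof.
elim: s a => [|b s IH] a /=; first by move=> *; exists [::].
case/andP=> ab pbs pa /andP[pb ps] /andP[b0 s0].
have [c] := poly_rolle ab (etrans (eqP pa) (esym (eqP pb))).
rewrite in_itv /= => /andP[ac cb] pc.
have [s'' [sz srt rt gt ng]] := IH b pbs pb ps s0.
exists (c :: s''); split => /=.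
- by rewrite sz.
- rewrite (path_sortedE lt_trans) srt andbT.
  by apply/allP => x xs; apply: lt_trans cb _; exact: (allP gt).
- by rewrite /root pc eqxx rt.
- rewrite ac /=; apply/allP => x xs; apply: lt_trans ab _.
  exact: (allP gt).
- by rewrite (lt_trans cb b0) ng.
Qed.

Lemma rolle_iter (R : realType) (p : {poly R}) (s : seq R) (n : nat) :
  sorted <%R s -> all (root p) s -> all (fun x => x < 0) s ->
  exists s' : seq R, [/\ size s' = (size s - n)%N, sorted <%R s',
    all (root p^`(n)) s' & all (fun x => x < 0) s'].
Proof.
move=> srt rt ng; elim: n => [|n [s' [sz srt' rt' ng']]].
  by exists s; rewrite subn0 derivn0.
case: s' sz srt' rt' ng' => [|a s'] sz srt' rt' ng'.
  by exists [::]; rewrite /= subnS -sz.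
move: rt' ng' => /= /andP[ra rs'] /andP[a0 ns'].
have [s'' [sz'' srt'' rt'' _ ng'']] := rolle_seq srt' ra rs' ns'.
exists s''; split => //.
- by rewrite sz'' subnS -sz.

Qed.

Lemma sum_sq_shift (R : realType) (u : seq R) (a : R) :
  \sum_(x <- u) (x - a) ^+ 2 =
  \sum_(x <- u) x ^+ 2 - 2 * a * \sum_(x <- u) x + (size u)%:R * a ^+ 2.
Proof.
elim: u => [|x u IH]; first by rewrite !big_nil /=; ring.
rewrite !big_cons IH /= -addn1 natrD; ring.
Qed.

Lemma cauchy_schwarz_seq (R : realType) (u : seq R) :
  (\sum_(x <- u) x) ^+ 2 <= (size u)%:R * \sum_(x <- u) x ^+ 2.
Proof.
elim: u => [|a u IH]; first by rewrite !big_nil /= mul0r expr0n.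
have h := sum_sq_shift u a.
have h0 : 0 <= \sum_(x <- u) (x - a) ^+ 2 by apply: sumr_ge0 => x _; exact: sqr_ge0.
rewrite !big_cons /= -[(size u).+1]addn1 natrD.
move: IH h0; rewrite h.
set S1 := \sum_(x <- u) x; set S2 := \sum_(x <- u) x ^+ 2; set n := (size u)%:R.
move=> IH h0.
have E : (n + 1) * (a ^+ 2 + S2) - (a + S1) ^+ 2 = (n * S2 - S1 ^+ 2) + (S2 - 2 * a * S1 + n * a ^+ 2) by ring.
rewrite -subr_ge0 E; apply: addr_ge0 => //; by rewrite subr_ge0.
Qed.

Lemma prod_coefs (R : realType) (w : seq R) : all (fun z => z != 0) w ->
  (\prod_(z <- w) ('X - z%:P))`_1 = - (\prod_(z <- w) ('X - z%:P))`_0 * \sum_(z <- w) z^-1 /\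
  (\prod_(z <- w) ('X - z%:P))`_1 ^+ 2 - 2 * (\prod_(z <- w) ('X - z%:P))`_0 * (\prod_(z <- w) ('X - z%:P))`_2
   = (\prod_(z <- w) ('X - z%:P))`_0 ^+ 2 * \sum_(z <- w) z^-1 ^+ 2.
Proof.
elim: w => [|a w IH] /=.
  by rewrite !big_nil !coefE /= => _; split; ring.
case/andP=> a0 /IH [E1 E2].
rewrite !big_cons mulrBl !coefE /=.
set P0 := (\prod_(z <- w) ('X - z%:P))`_0 in E1 E2 *.
set P1 := (\prod_(z <- w) ('X - z%:P))`_1 in E1 E2 *.
set P2 := (\prod_(z <- w) ('X - z%:P))`_2 in E1 E2 *.
set S1 := \sum_(z <- w) z^-1 in E1 E2 *.
set S2 := \sum_(z <- w) z^-1 ^+ 2 in E1 E2 *.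
split.
  rewrite E1; field; exact: a0.
apply/eqP; rewrite -subr_eq0; apply/eqP.
have -> : (P0 - a * P1) ^+ 2 - 2 * (0 - a * P0) * (P1 - a * P2) -
  (0 - a * P0) ^+ 2 * (a^-1 ^+ 2 + S2) = a ^+ 2 * ((P1 ^+ 2 - 2 * P0 * P2) - P0 ^+ 2 * S2).
  by field.
by rewrite E2 subrr mulr0.
Qed.

Lemma bottom_newton (R : realType) (g : {poly R}) (w : seq R) :
  all (fun z => z != 0) w -> uniq w -> all (root g) w -> (size g <= (size w).+1)%N ->
  2 * (size w)%:R * g`_0 * g`_2 <= ((size w)%:R - 1) * g`_1 ^+ 2.
Proof.
move=> nz uw rw sg.
have [q Eq] : exists q, g = q * \prod_(z <- w) ('X - z%:P).
  by apply: uniq_roots_prod_XsubC => //; rewrite uniq_rootsE.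
have hq : q = (q`_0)%:P.
  case: (eqVneq q 0) => [->|q0]; first by rewrite coef0.
  apply: size1_polyC.
  have P0 : \prod_(z <- w) ('X - z%:P) != 0 :> {poly R}.
    by rewrite -size_poly_eq0 size_prod_XsubC.
  move: sg; rewrite Eq size_mul // size_prod_XsubC.
  case: (size q) => //= m; rewrite addnS /=; lia.
rewrite Eq hq !coefCM.
have [E1 E2] := prod_coefs nz.
set P0 := (\prod_(z <- w) ('X - z%:P))`_0 in E1 E2 *.
set P1 := (\prod_(z <- w) ('X - z%:P))`_1 in E1 E2 *.
set P2 := (\prod_(z <- w) ('X - z%:P))`_2 in E1 E2 *.
set S1 := \sum_(z <- w) z^-1 in E1 E2 *.
set S2 := \sum_(z <- w) z^-1 ^+ 2 in E1 E2 *.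
have CS := cauchy_schwarz_seq [seq z^-1 | z <- w].
rewrite !big_map size_map -/S1 -/S2 in CS.
set n := (size w)%:R in CS *.
set c := q`_0.
have E3 : (n - 1) * (c * P1) ^+ 2 - 2 * n * (c * P0) * (c * P2) =
   (c * P0) ^+ 2 * (n * S2 - S1 ^+ 2).
  have -> : 2 * n * (c * P0) * (c * P2) = n * c ^+ 2 * (P1 ^+ 2 - P0 ^+ 2 * S2) by rewrite -E2; ring.
  rewrite E1; ring.
rewrite -subr_ge0 E3; apply: mulr_ge0; first exact: sqr_ge0.
by rewrite subr_ge0.
Qed.

Definition dR (R : realType) (ns : seq R) (k : nat) : {poly R} :=
  (\prod_(z <- ns) ('X - z%:P))^`(k.-1).

Lemma newton_gen (R : realType) (ns : seq R) (k : nat) :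
  uniq ns -> all (fun x => x < 0) ns -> size ns = 8%N -> (0 < k < 8)%N ->
  2 * (9 - k)%:R * (dR ns k)`_0 * (dR ns k)`_2 <= ((9 - k)%:R - 1) * (dR ns k)`_1 ^+ 2.
Proof.
move=> un ng sz /andP[k0 k8]; set g := dR ns k.
set RR := \prod_(z <- ns) ('X - z%:P).
have srt : sorted <%R (sort <=%R ns) by rewrite sort_lt_sorted.
have rt : all (root RR) (sort <=%R ns).
  apply/allP => x; rewrite mem_sort => xn.
  by rewrite /RR root_prod_XsubC xn.
have ng' : all (fun x => x < 0) (sort <=%R ns) by rewrite all_sort.
have [s' [sz' srt' rt' ng'']] := rolle_iter k.-1 srt rt ng'.
rewrite size_sort sz in sz'.
have -> : (9 - k)%N = size s' by rewrite sz'; lia.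
apply: bottom_newton => //.
- by apply/allP => x /(allP ng'') x0; rewrite ltr0_neq0.
- exact: lt_sorted_uniq srt'.
- apply/leq_sizeP => j hj.
  rewrite /g /dR -/RR coef_derivn nth_default ?mul0rn //.
  by rewrite /RR size_prod_XsubC sz; lia.
Qed.

Lemma newton_r1 (R : realType) (ns : seq R) :
  uniq ns -> all (fun x => x < 0) ns -> size ns = 8%N ->
  16 * (\prod_(z <- ns) ('X - z%:P))`_0 * (\prod_(z <- ns) ('X - z%:P))`_2
  <= 7 * (\prod_(z <- ns) ('X - z%:P))`_1 ^+ 2.
Proof.
move=> un ng sz; have H := @newton_gen R ns 1 un ng sz isT.
move: H; rewrite /dR !coef_derivn.
set r := fun i => (\prod_(z <- ns) ('X - z%:P))`_i.
rewrite -!/(r _).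
rewrite -[r 0%N *+ _]mulr_natr -[r 2%N *+ _]mulr_natr -[r 1%N *+ _]mulr_natr.
have e0 : ((1.-1 + 0) ^_ 1.-1)%:R = 1 :> R by [].
have e1 : ((1.-1 + 1) ^_ 1.-1)%:R = 1 :> R by [].
have e2 : ((1.-1 + 2) ^_ 1.-1)%:R = 1 :> R by [].
have e3 : (9 - 1)%:R = 8 :> R by [].
rewrite ?e0 ?e1 ?e2 ?e3.
move=> H; lra.
Qed.

Lemma newton_r2 (R : realType) (ns : seq R) :
  uniq ns -> all (fun x => x < 0) ns -> size ns = 8%N ->
  21 * (\prod_(z <- ns) ('X - z%:P))`_1 * (\prod_(z <- ns) ('X - z%:P))`_3
  <= 12 * (\prod_(z <- ns) ('X - z%:P))`_2 ^+ 2.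
Proof.
move=> un ng sz; have H := @newton_gen R ns 2 un ng sz isT.
move: H; rewrite /dR !coef_derivn.
set r := fun i => (\prod_(z <- ns) ('X - z%:P))`_i.
rewrite -!/(r _).
rewrite -[r 1%N *+ _]mulr_natr -[r 3%N *+ _]mulr_natr -[r 2%N *+ _]mulr_natr.
have e0 : ((2.-1 + 0) ^_ 2.-1)%:R = 1 :> R by [].
have e1 : ((2.-1 + 1) ^_ 2.-1)%:R = 2 :> R by [].
have e2 : ((2.-1 + 2) ^_ 2.-1)%:R = 3 :> R by [].
have e3 : (9 - 2)%:R = 7 :> R by [].
rewrite ?e0 ?e1 ?e2 ?e3.
move=> H; lra.
Qed.

Lemma newton_r3 (R : realType) (ns : seq R) :
  uniq ns -> all (fun x => x < 0) ns -> size ns = 8%N ->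
  24 * (\prod_(z <- ns) ('X - z%:P))`_2 * (\prod_(z <- ns) ('X - z%:P))`_4
  <= 15 * (\prod_(z <- ns) ('X - z%:P))`_3 ^+ 2.
Proof.
move=> un ng sz; have H := @newton_gen R ns 3 un ng sz isT.
move: H; rewrite /dR !coef_derivn.
set r := fun i => (\prod_(z <- ns) ('X - z%:P))`_i.
rewrite -!/(r _).
rewrite -[r 2%N *+ _]mulr_natr -[r 4%N *+ _]mulr_natr -[r 3%N *+ _]mulr_natr.
have e0 : ((3.-1 + 0) ^_ 3.-1)%:R = 2 :> R by [].
have e1 : ((3.-1 + 1) ^_ 3.-1)%:R = 6 :> R by [].
have e2 : ((3.-1 + 2) ^_ 3.-1)%:R = 12 :> R by [].
have e3 : (9 - 3)%:R = 6 :> R by [].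
rewrite ?e0 ?e1 ?e2 ?e3.
move=> H; lra.
Qed.

Lemma newton_r4 (R : realType) (ns : seq R) :
  uniq ns -> all (fun x => x < 0) ns -> size ns = 8%N ->
  25 * (\prod_(z <- ns) ('X - z%:P))`_3 * (\prod_(z <- ns) ('X - z%:P))`_5
  <= 16 * (\prod_(z <- ns) ('X - z%:P))`_4 ^+ 2.
Proof.
move=> un ng sz; have H := @newton_gen R ns 4 un ng sz isT.
move: H; rewrite /dR !coef_derivn.
set r := fun i => (\prod_(z <- ns) ('X - z%:P))`_i.
rewrite -!/(r _).
rewrite -[r 3%N *+ _]mulr_natr -[r 5%N *+ _]mulr_natr -[r 4%N *+ _]mulr_natr.
have e0 : ((4.-1 + 0) ^_ 4.-1)%:R = 6 :> R by [].
have e1 : ((4.-1 + 1) ^_ 4.-1)%:R = 24 :> R by [].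
have e2 : ((4.-1 + 2) ^_ 4.-1)%:R = 60 :> R by [].
have e3 : (9 - 4)%:R = 5 :> R by [].
rewrite ?e0 ?e1 ?e2 ?e3.
move=> H; lra.
Qed.

Lemma newton_r5 (R : realType) (ns : seq R) :
  uniq ns -> all (fun x => x < 0) ns -> size ns = 8%N ->
  24 * (\prod_(z <- ns) ('X - z%:P))`_4 * (\prod_(z <- ns) ('X - z%:P))`_6
  <= 15 * (\prod_(z <- ns) ('X - z%:P))`_5 ^+ 2.
Proof.
move=> un ng sz; have H := @newton_gen R ns 5 un ng sz isT.
move: H; rewrite /dR !coef_derivn.
set r := fun i => (\prod_(z <- ns) ('X - z%:P))`_i.
rewrite -!/(r _).
rewrite -[r 4%N *+ _]mulr_natr -[r 6%N *+ _]mulr_natr -[r 5%N *+ _]mulr_natr.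
have e0 : ((5.-1 + 0) ^_ 5.-1)%:R = 24 :> R by [].
have e1 : ((5.-1 + 1) ^_ 5.-1)%:R = 120 :> R by [].
have e2 : ((5.-1 + 2) ^_ 5.-1)%:R = 360 :> R by [].
have e3 : (9 - 5)%:R = 4 :> R by [].
rewrite ?e0 ?e1 ?e2 ?e3.
move=> H; lra.
Qed.

Lemma newton_r6 (R : realType) (ns : seq R) :
  uniq ns -> all (fun x => x < 0) ns -> size ns = 8%N ->
  21 * (\prod_(z <- ns) ('X - z%:P))`_5 * (\prod_(z <- ns) ('X - z%:P))`_7
  <= 12 * (\prod_(z <- ns) ('X - z%:P))`_6 ^+ 2.
Proof.
move=> un ng sz; have H := @newton_gen R ns 6 un ng sz isT.
move: H; rewrite /dR !coef_derivn.
set r := fun i => (\prod_(z <- ns) ('X - z%:P))`_i.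
rewrite -!/(r _).
rewrite -[r 5%N *+ _]mulr_natr -[r 7%N *+ _]mulr_natr -[r 6%N *+ _]mulr_natr.
have e0 : ((6.-1 + 0) ^_ 6.-1)%:R = 120 :> R by [].
have e1 : ((6.-1 + 1) ^_ 6.-1)%:R = 720 :> R by [].
have e2 : ((6.-1 + 2) ^_ 6.-1)%:R = 2520 :> R by [].
have e3 : (9 - 6)%:R = 3 :> R by [].
rewrite ?e0 ?e1 ?e2 ?e3.
move=> H; lra.
Qed.

Lemma newton_r7 (R : realType) (ns : seq R) :
  uniq ns -> all (fun x => x < 0) ns -> size ns = 8%N ->
  16 * (\prod_(z <- ns) ('X - z%:P))`_6 * (\prod_(z <- ns) ('X - z%:P))`_8
  <= 7 * (\prod_(z <- ns) ('X - z%:P))`_7 ^+ 2.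
Proof.
move=> un ng sz; have H := @newton_gen R ns 7 un ng sz isT.
move: H; rewrite /dR !coef_derivn.
set r := fun i => (\prod_(z <- ns) ('X - z%:P))`_i.
rewrite -!/(r _).
rewrite -[r 6%N *+ _]mulr_natr -[r 8%N *+ _]mulr_natr -[r 7%N *+ _]mulr_natr.
have e0 : ((7.-1 + 0) ^_ 7.-1)%:R = 720 :> R by [].
have e1 : ((7.-1 + 1) ^_ 7.-1)%:R = 5040 :> R by [].
have e2 : ((7.-1 + 2) ^_ 7.-1)%:R = 20160 :> R by [].
have e3 : (9 - 7)%:R = 2 :> R by [].
rewrite ?e0 ?e1 ?e2 ?e3.
move=> H; lra.
Qed.

Lemma prod_coef_pos (R : realType) (ns : seq R) : all (fun x => x < 0) ns ->
  forall i, 0 <= (\prod_(z <- ns) ('X - z%:P))`_i /\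
    ((i <= size ns)%N -> 0 < (\prod_(z <- ns) ('X - z%:P))`_i).
Proof.
elim: ns => [|a ns IH] /=.
  move=> _ i; rewrite big_nil coefE; case: i => [|i] //=; split => //; exact: ltr01.
case/andP=> a0 /IH H i; rewrite big_cons mulrBl !coefE.
have [H1 H2] := H i.
have ha : 0 <= - a * (\prod_(z <- ns) ('X - z%:P))`_i by apply: mulr_ge0 => //; lra.
case: i H1 H2 ha => [|i] H1 H2 ha /=.
  have := H2 isT; split; nra.
have [H3 H4] := H i.
split; first by lra.
move=> hi; have := H4 hi; lra.
Qed.

Lemma tstep (R : realType) (xi a b c A Bc : R) :
  0 < xi -> 0 < a -> 0 < b -> 0 < c -> 0 < Bc -> A * a * c <= Bc * b ^+ 2 ->
  A / Bc * (a / (xi * b)) <= b / (xi * c).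
Proof.
move=> x0 a0 b0 c0 B0 h.
rewrite -subr_ge0.
have -> : b / (xi * c) - A / Bc * (a / (xi * b)) = (Bc * b ^+ 2 - A * a * c) / (Bc * xi * b * c).
  by field; rewrite !gt_eqF.
apply: divr_ge0; first by rewrite subr_ge0.
by apply: ltW; rewrite !mulr_gt0.
Qed.
Lemma double_root (R : realType) (q T : {poly R}) x :
  root q x -> root T x -> root (q * T)^`() x.
Proof.
move=> /eqP hq /eqP hT; rewrite /root derivM hornerD !hornerM hq hT.
by rewrite !mulr0 mul0r addr0.
Qed.

Lemma main_helper (R : realType) : realizable R sigma0 1%N 8%N -> False.
Proof.
case=> p [mon [szp sgn] [ps [ups szps hps]] [ns [uns szns hns]] simple].
have sz12 : size p = 12%N by rewrite szp.
have s0 : p`_0 < 0 by have := sgn 0%N; rewrite sz12 /=; apply.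
have s1 : 0 < p`_1 by have := sgn 1%N; rewrite sz12 /=; apply.
have s5 : 0 < p`_5 by have := sgn 5%N; rewrite sz12 /=; apply.
have s6 : p`_6 < 0 by have := sgn 6%N; rewrite sz12 /=; apply.
have s10 : p`_10 < 0 by have := sgn 10%N; rewrite sz12 /=; apply.
case: ps ups szps hps => [|xi [|]] //= _ _ hps.
have := hps xi; rewrite mem_seq1 eqxx => /esym/andP[xi0 rxi].
have ns0 : all (fun x => x < 0) ns by apply/allP => x; rewrite hns => /andP[].
have nsr : all (root p) ns by apply/allP => x; rewrite hns => /andP[].
set RR := \prod_(z <- ns) ('X - z%:P).
have [q Eq] : exists q, p = q * (('X - xi%:P) * RR).
  have := @uniq_roots_prod_XsubC _ p (xi :: ns).
  rewrite big_cons; apply; first by rewrite /= rxi.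
  rewrite uniq_rootsE /= uns andbT; apply/negP => /(allP ns0); lra.
have szRR : size RR = 9%N by rewrite /RR size_prod_XsubC szns.
have RR0 : RR != 0 by rewrite -size_poly_eq0 szRR.
have T0 : ('X - xi%:P) * RR != 0 by rewrite mulf_neq0 // polyXsubC_eq0.
have szT : size (('X - xi%:P) * RR) = 10%N by rewrite size_mul ?polyXsubC_eq0 // size_XsubC szRR.
have q0 : q != 0 by apply/eqP => q0; move: sz12; rewrite Eq q0 mul0r size_poly0.
have szq : size q = 3%N.
  move: sz12; rewrite Eq size_mul // szT addnS /= => /eqP.
  by rewrite -[12%N]/(3 + 9)%N eqn_add2r => /eqP.
have lq : q`_2 = 1.
  have := monicP mon; rewrite Eq lead_coefM.
  have -> : lead_coef (('X - xi%:P) * RR) = 1.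
    by apply/eqP; rewrite -monicE monicMl ?monicXsubC // monic_prod_XsubC.
  by rewrite mulr1 lead_coefE szq.
set b := q`_1; set g := q`_0.
have Eqq : q = 'X^2 + b%:P * 'X + g%:P.
  apply/polyP => i; rewrite !coefE.
  case: i => [|[|[|i]]] /=; rewrite ?lq /b /g ?mulr0 ?mulr1 ?add0r ?addr0 //.
  by rewrite nth_default // szq.
have hD : b * b < 4 * g.
  rewrite ltNge; apply/negP => hD.
  set s := Num.sqrt (b * b - 4 * g).
  have hs : s ^+ 2 = b * b - 4 * g by rewrite sqr_sqrtr // subr_ge0.
  set x := (- b + s) / 2.
  have rq : root q x.
    have E : ('X^2 + b%:P * 'X + g%:P).[x] = x ^+ 2 + b * x + g by rewrite !hornerE.
    have h2 : 2 * x = - b + s by rewrite /x mulrC divfK // pnatr_eq0.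
    have E4 : 4 * (x ^+ 2 + b * x + g) = s ^+ 2 - (b * b - 4 * g).
      have -> : 4 * (x ^+ 2 + b * x + g) = (2 * x) ^+ 2 + 2 * b * (2 * x) + 4 * g by ring.
      rewrite h2; ring.
    rewrite /root Eqq E; move: E4; rewrite hs subrr => /eqP.
    by rewrite mulf_eq0 pnatr_eq0.
  have rpx : root p x by rewrite Eq rootM rq.
  have [x0|x0|x0] := ltgtP x 0.
  - have : x \in ns by rewrite hns x0.
    move=> xn; have rT : root (('X - xi%:P) * RR) x.
      by rewrite rootM /RR root_prod_XsubC xn orbT.
    have := simple x; rewrite x0 orbT rpx => /(_ isT isT).
    by rewrite Eq double_root.
  - have : x \in [:: xi] by rewrite hps x0.
    rewrite mem_seq1 => /eqP xe; have rT : root (('X - xi%:P) * RR) x.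
      by rewrite rootM root_XsubC xe eqxx.
    have := simple x; rewrite x0 rpx => /(_ isT isT).
    by rewrite Eq double_root.
  - move: rpx; rewrite x0 /root horner_coef0 => /eqP h0.
    by move: s0; rewrite h0 ltxx.
have Ep : p = RR * 'X^3 + (b - xi)%:P * (RR * 'X^2) + (g - xi * b)%:P * (RR * 'X)
    + (- (xi * g))%:P * RR.
  rewrite Eq Eqq !(polyCB, polyCN, polyCM); ring.
have r8 : RR`_8 = 1.
  have : RR \is monic by apply: monic_prod_XsubC.
  by move=> /monicP; rewrite lead_coefE szRR.
have r9 : RR`_9 = 0 by rewrite nth_default // szRR.
have r10 : RR`_10 = 0 by rewrite nth_default // szRR.
have rpos : forall i, (i <= 8)%N -> 0 < RR`_i.
  by move=> i hi; have [_ ] := prod_coef_pos ns0 i; apply; rewrite szns.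
have P1 : p`_1 = (g - xi * b) * RR`_0 - xi * g * RR`_1.
  rewrite Ep !coefE /=; ring.
have P5 : p`_5 = RR`_2 + (b - xi) * RR`_3 + (g - xi * b) * RR`_4 - xi * g * RR`_5.
  rewrite Ep !coefE /=; ring.
have P6 : p`_6 = RR`_3 + (b - xi) * RR`_4 + (g - xi * b) * RR`_5 - xi * g * RR`_6.
  rewrite Ep !coefE /=; ring.
have P10 : p`_10 = RR`_7 + b - xi.
  rewrite Ep !coefE /= r8 r9 r10; ring.
have N1 := newton_r1 uns ns0 szns.
have N2 := newton_r2 uns ns0 szns.
have N3 := newton_r3 uns ns0 szns.
have N4 := newton_r4 uns ns0 szns.
have N5 := newton_r5 uns ns0 szns.
have N6 := newton_r6 uns ns0 szns.
have N7 := newton_r7 uns ns0 szns.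
rewrite -/RR in N1 N2 N3 N4 N5 N6 N7.
have q0' := rpos 0%N isT; have q1 := rpos 1%N isT; have q2 := rpos 2%N isT.
have q3 := rpos 3%N isT; have q4 := rpos 4%N isT; have q5 := rpos 5%N isT.
have q6 := rpos 6%N isT; have q7 := rpos 7%N isT.
rewrite r8 in N7.
set r0 := RR`_0 in N1 P1 q0' *.
set r1 := RR`_1 in N1 N2 P1 q1 *.
set r2 := RR`_2 in N1 N2 N3 P5 q2 *.
set r3 := RR`_3 in N2 N3 N4 P5 P6 q3 *.
set r4 := RR`_4 in N3 N4 N5 P5 P6 q4 *.
set r5 := RR`_5 in N4 N5 N6 P5 P6 q5 *.
set r6 := RR`_6 in N5 N6 N7 P6 q6 *.
set r7 := RR`_7 in N6 N7 P10 q7 *.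
have c7 : (0 : R) < 7 by rewrite ltr0n.
have c12 : (0 : R) < 12 by rewrite ltr0n.
have c15 : (0 : R) < 15 by rewrite ltr0n.
have c16 : (0 : R) < 16 by rewrite ltr0n.
have T1 := tstep xi0 q0' q1 q2 c7 N1.
have T2 := tstep xi0 q1 q2 q3 c12 N2.
have T3 := tstep xi0 q2 q3 q4 c15 N3.
have T4 := tstep xi0 q3 q4 q5 c16 N4.
have T5 := tstep xi0 q4 q5 q6 c15 N5.
have T6 := tstep xi0 q5 q6 q7 c12 N6.
have T7 := tstep xi0 q6 q7 ltr01 c7 N7.
rewrite mulr1 in T7.
set t1 := r0 / (xi * r1) in T1 *.
set t2 := r1 / (xi * r2) in T1 T2 *.
set t3 := r2 / (xi * r3) in T2 T3 *.
set t4 := r3 / (xi * r4) in T3 T4 *.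
set t5 := r4 / (xi * r5) in T4 T5 *.
set t6 := r5 / (xi * r6) in T5 T6 *.
set t7 := r6 / (xi * r7) in T6 T7 *.
set t8 := r7 / xi in T7 *.
have t1p : 0 < t1 by rewrite /t1 divr_gt0 // mulr_gt0.
have t3p : 0 < t3 by rewrite /t3 divr_gt0 // mulr_gt0.
have t4p : 0 < t4 by rewrite /t4 divr_gt0 // mulr_gt0.
have t34 : t3 <= t4 by lra.
have t14 : 32/5 * t1 <= t4 by lra.
have t58 : 32/5 * t5 <= t8 by lra.
set B := - b / xi.
set gm := g / (xi * xi).
have xn : xi != 0 by rewrite gt_eqF.
have hD' : B * B < 4 * gm.
  have E : 4 * gm - B * B = (4 * g - b * b) / (xi * xi) by rewrite /gm /B; field.
  by rewrite -subr_gt0 E divr_gt0 ?mulr_gt0 // subr_gt0.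
have C1 : gm < (gm + B) * t1.
  have E : (gm + B) * t1 - gm = p`_1 / (xi ^+ 3 * r1).
    by rewrite P1 /gm /B /t1; field; rewrite !gt_eqF.
  by rewrite -subr_gt0 E divr_gt0 ?mulr_gt0 ?exprn_gt0.
have C5 : gm < t5 * (t3 * t4 - (1 + B) * t4 + gm + B).
  have E : t5 * (t3 * t4 - (1 + B) * t4 + gm + B) - gm = p`_5 / (xi ^+ 3 * r5).
    by rewrite P5 /gm /B /t3 /t4 /t5; field; rewrite !gt_eqF.
  by rewrite -subr_gt0 E divr_gt0 ?mulr_gt0 ?exprn_gt0.
have C6 : t6 * (t4 * t5 - (1 + B) * t5 + gm + B) < gm.
  have E : gm - t6 * (t4 * t5 - (1 + B) * t5 + gm + B) = - p`_6 / (xi ^+ 3 * r6).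
    by rewrite P6 /gm /B /t4 /t5 /t6; field; rewrite !gt_eqF.
  by rewrite -subr_gt0 E divr_gt0 ?mulr_gt0 ?exprn_gt0 // oppr_gt0.
have C10 : t8 < 1 + B.
  have E : 1 + B - t8 = - p`_10 / xi.
    by rewrite P10 /B /t8; field.
  by rewrite -subr_gt0 E divr_gt0 // oppr_gt0.
case: (lerP t5 1) => h5.
  exact: (finalA t1p t3p t34 t14 T4 hD' C1 C5 h5).
have T5' : 8/5 * t5 <= t6 by lra.
exact: (finalB t4p h5 T5' t58 C10 hD' C6).
Qed.


Local Close Scope ring_scope.

Theorem theorem1 (R : realType) : ~ realizable R sigma0 1 8.
Proof. exact: (@main_helper R). Qed.
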